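(* Let $k\ge1$ and let $F$ be a 2-factor on $3k$ vertices. The bipartite construction $B$ with ratio $\frac13$ on $3k$ vertices contains a copy of $F$ with at least $2k-1$ red edges and a copy of $F$ with at least $2k-1$ blue edges.
   Context: A 2-factor on $N$ vertices is a 2-regular graph on $N$ vertices. The bipartite construction with ratio $\rho$ on $N$ vertices is the red/blue-coloring of $K_N$ obtained by partitioning the vertices into $X\cup Y$ with $|X|=\rho N$, coloring all edges touching $X$ with one color and all edges inside $Y$ with the other color (either assignment of red/blue). A copy of $F$ is a subgraph isomorphic to $F$. *)

(* Defs.v *)
From mathcomp Require Import all_boot all_fingroup.
Set Implicit Arguments. Unset Strict Implicit. Unset Printing Implicit Defensive.

Definition two_factor (n : nat) (F : rel 'I_n) : Prop :=
  [/\ symmetric F, irreflexive F & forall v : 'I_n, #|[set u | F v u]| = 2].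

(* Red/blue colourings of K_n: [c x y] is the colour of edge {x,y}
   (true = red, false = blue); only its values on x != y matter. *)

Definition bip_coloring (n : nat) (X : {set 'I_n}) (colX : bool) :
    'I_n -> 'I_n -> bool :=
  fun x y => if (x \in X) || (y \in X) then colX else ~~ colX.

(* A copy of a spanning graph F in K_n is the image of F under a permutation
   f of the vertices; this counts the edges of that copy having colour col
   (each edge {u,v} of F, u < v, is counted once). *)
Definition copy_col_edges (n : nat) (F : rel 'I_n) (f : {perm 'I_n})
    (c : 'I_n -> 'I_n -> bool) (col : bool) : nat :=
  #|[set p : 'I_n * 'I_n | [&& p.1 < p.2, F p.1 p.2 & c (f p.1) (f p.2) == col]]|.

(* Main.v *)
Require Import Defs.
From mathcomp Require Import all_boot all_fingroup.
From mathcomp Require Import zify.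
Set Implicit Arguments. Unset Strict Implicit. Unset Printing Implicit Defensive.

Section Aux.
Variables (n : nat) (F : rel 'I_n).
Hypotheses (symF : symmetric F) (irrF : irreflexive F)
  (degF : forall v : 'I_n, #|[set u | F v u]| = 2).

Lemma card_swap (P : rel 'I_n) :
  #|[set p : 'I_n * 'I_n | P p.1 p.2]| = #|[set p : 'I_n * 'I_n | P p.2 p.1]|.
Proof.
have inj : injective (fun p : 'I_n * 'I_n => (p.2, p.1)).
  by move=> [a b] [c d] /= [-> ->].
rewrite -(card_preimset _ inj); apply: eq_card => p; by rewrite !inE.
Qed.

Lemma card_half (Q : rel 'I_n) : symmetric Q -> irreflexive Q ->
  2 * #|[set p : 'I_n * 'I_n | (p.1 < p.2) && Q p.1 p.2]| =
  #|[set p : 'I_n * 'I_n | Q p.1 p.2]|.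
Proof.
move=> sQ iQ.
rewrite -(cardsID [set p : 'I_n * 'I_n | p.1 < p.2] [set p | Q p.1 p.2]).
have -> : [set p : 'I_n * 'I_n | Q p.1 p.2] :&: [set p : 'I_n*'I_n | p.1 < p.2]
   = [set p : 'I_n * 'I_n | (p.1 < p.2) && Q p.1 p.2].
  by apply/setP => p; rewrite !inE andbC.
have -> : [set p : 'I_n * 'I_n | Q p.1 p.2] :\: [set p : 'I_n*'I_n | p.1 < p.2]
   = [set p : 'I_n * 'I_n | (p.2 < p.1) && Q p.2 p.1].
  apply/setP => -[a b]; rewrite !inE /=.
  case: (ltngtP a b) => h /=; first by [].
    by rewrite sQ.
  by have -> : a = b by apply: val_inj.
have E := card_swap (fun a b => (a < b) && Q a b).
rewrite /= in E. rewrite -E. by rewrite mul2n addnn.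
Qed.

Lemma card_sum (P : rel 'I_n) :
  #|[set p : 'I_n * 'I_n | P p.1 p.2]| = \sum_u #|[set v | P u v]|.
Proof.
transitivity (\sum_u \sum_(v | P u v) 1).
  rewrite pair_big_dep /= sum1dep_card.
  by apply: eq_card => p; rewrite !inE.
by apply: eq_bigr => u _; rewrite sum1dep_card.
Qed.

Lemma card_fst (P : pred 'I_n) :
  #|[set p : 'I_n * 'I_n | F p.1 p.2 && P p.1]| = 2 * #|[set u | P u]|.
Proof.
have E := card_sum (fun a b => F a b && P a). rewrite /= in E. rewrite E.
rewrite (eq_bigr (fun u => if P u then 2 else 0)); last first.
  move=> u _; case: (P u).
    by rewrite -(degF u); apply: eq_card => v; rewrite !inE andbT.
  apply/eqP; rewrite cards_eq0; apply/eqP/setP => v; by rewrite !inE andbF.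
rewrite -big_mkcond /= -sum1dep_card big_distrr /=.
by apply: eq_bigr => i _; rewrite muln1.
Qed.

Lemma card_snd (P : pred 'I_n) :
  #|[set p : 'I_n * 'I_n | F p.1 p.2 && P p.2]| = 2 * #|[set u | P u]|.
Proof.
have E := card_swap (fun a b => F a b && P b). rewrite /= in E. rewrite E.
rewrite -card_fst; apply: eq_card => p; by rewrite !inE symF.
Qed.

Definition iS (S : {set 'I_n}) :=
  #|[set p : 'I_n * 'I_n | [&& F p.1 p.2, p.1 \in S & p.2 \in S]]|.

Definition cntQ (b : bool) (S : {set 'I_n}) :=
  #|[set p : 'I_n * 'I_n | F p.1 p.2 && (b == ((p.1 \in S) || (p.2 \in S)))]|.

Lemma touch S : cntQ true S + iS S = 4 * #|S|.
Proof.
have H := cardsUI [set p : 'I_n * 'I_n | F p.1 p.2 && (p.1 \in S)]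
                [set p : 'I_n * 'I_n | F p.1 p.2 && (p.2 \in S)].
have E1 : [set p : 'I_n * 'I_n | F p.1 p.2 && (p.1 \in S)] :|:
          [set p : 'I_n * 'I_n | F p.1 p.2 && (p.2 \in S)] =
          [set p : 'I_n * 'I_n | F p.1 p.2 && (true == ((p.1 \in S) || (p.2 \in S)))].
  by apply/setP => p; rewrite !inE -andb_orr.
have E2 : [set p : 'I_n * 'I_n | F p.1 p.2 && (p.1 \in S)] :&:
          [set p : 'I_n * 'I_n | F p.1 p.2 && (p.2 \in S)] =
          [set p : 'I_n * 'I_n | [&& F p.1 p.2, p.1 \in S & p.2 \in S]].
  by apply/setP => p; rewrite !inE; case: (F _ _); case: (_ \in S).
have E3 : #|[set u | u \in S]| = #|S| by apply: eq_card => u; rewrite inE.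
rewrite E1 E2 card_fst card_snd E3 in H; rewrite /cntQ /iS; lia.
Qed.

Lemma totalF : #|[set p : 'I_n * 'I_n | F p.1 p.2]| = 2 * n.
Proof.
have := card_fst predT.
have -> : #|[set u : 'I_n | predT u]| = n by rewrite cardsT card_ord.
move=> <-; apply: eq_card => p; by rewrite !inE andbT.
Qed.

Lemma nontouch S : cntQ false S + 4 * #|S| = 2 * n + iS S.
Proof.
rewrite -touch -totalF addnA.
rewrite -(cardsID [set p : 'I_n * 'I_n | ((p.1 \in S) || (p.2 \in S))]
                  [set p : 'I_n * 'I_n | F p.1 p.2]).
rewrite /cntQ; congr (_ + _); rewrite addnC; congr (_ + _); apply: eq_card => p;
  rewrite !inE; by case: (_ || _); rewrite ?andbT ?andbF.
Qed.


Lemma indep_ex m : 3 * m <= n -> exists S : {set 'I_n},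
  #|S| = m /\ forall u v, u \in S -> v \in S -> ~~ F u v.
Proof.
elim: m => [|m IH] hm.
  by exists set0; split; [rewrite cards0 | move=> u v; rewrite inE].
have [S [cS iSS]] := IH (leq_trans (leq_mul (leqnn 3) (leqnSn m)) hm).
pose N := [set v | [exists u in S, F u v]].
have cN : #|N| <= 2 * m.
  have E := card_fst (fun u => u \in S).
  have E3 : #|[set u | u \in S]| = #|S| by apply: eq_card => u; rewrite inE.
  rewrite /= E3 in E; rewrite -cS -E.
  apply: leq_trans (leq_imset_card (fun p : 'I_n * 'I_n => p.2) _).
  apply: subset_leq_card; apply/subsetP => v; rewrite inE => /existsP [u /andP [uS Fuv]].
  by apply/imsetP; exists (u, v); rewrite // inE /= Fuv.
have cU : #|S :|: N| <= 3 * m.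
  have [h _] := leq_card_setU S N; move: h cN; rewrite cS; move: #|N| #|S :|: N| => x y; lia.
have : 0 < #|~: (S :|: N)|.
  have := cardsC (S :|: N); rewrite card_ord; move: cU hm.
  move: #|S :|: N| #|~: (S :|: N)| => x y; lia.
rewrite card_gt0 => /set0Pn [w]; rewrite !inE negb_or => /andP [wS wN].
exists (w |: S); split; first by rewrite cardsU1 wS cS.
move=> u v; rewrite !inE => /orP [/eqP -> | uS] /orP [/eqP -> | vS].
- by rewrite irrF.
- apply/negP => Fwv; move: wN; rewrite symF in Fwv.
  by move/negP; apply; apply/existsP; exists v; rewrite vS.
- apply/negP => Fuw; move: wN.
  by move/negP; apply; apply/existsP; exists u; rewrite uS.
- exact: iSS.
Qed.


Lemma iS0 (S : {set 'I_n}) : (forall u v, u \in S -> v \in S -> ~~ F u v) -> iS S = 0.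
Proof.
move=> h; apply/eqP; rewrite cards_eq0; apply/eqP/setP => -[u v]; rewrite !inE /=.
by apply/negP => /and3P [Fuv uS vS]; move: (h u v uS vS); rewrite Fuv.
Qed.

Lemma iS_sub (S T : {set 'I_n}) : S \subset T -> iS S <= iS T.
Proof.
move=> sST; apply: subset_leq_card; apply/subsetP => -[u v]; rewrite !inE /=.
by case/and3P => -> uS vS; rewrite !(subsetP sST).
Qed.

Lemma conn_ex m : m < n -> exists S : {set 'I_n}, #|S| = m.+1 /\ 2 * m <= iS S.
Proof.
elim: m => [|m IH] hm.
  by exists [set Ordinal hm]; rewrite cards1.
have [S [cS iSS]] := IH (ltnW hm).
have [w wS] : exists w, w \notin S.
  have : 0 < #|~: S| by have := cardsC S; rewrite card_ord; lia.
  by rewrite card_gt0 => /set0Pn [w]; rewrite inE; exists w.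
have cS' : #|w |: S| = m.+2 by rewrite cardsU1 wS cS.
case: (boolP [exists p : 'I_n * 'I_n, [&& F p.1 p.2, p.1 \in S & p.2 \notin S]]).
  case/existsP => -[u x] /and3P /= [Fux uS xS].
  exists (x |: S); split; first by rewrite cardsU1 xS cS.
  pose T := [set p : 'I_n * 'I_n | [&& F p.1 p.2, p.1 \in S & p.2 \in S]].
  have h1 : (x, u) \notin T by rewrite inE /= (negbTE xS) !andbF.
  have h2 : (u, x) \notin (x, u) |: T.
    rewrite !inE /= (negbTE xS) !andbF orbF; apply/negP => /eqP [eux _].
    by move: uS; rewrite eux (negbTE xS).
  have : #|(u, x) |: ((x, u) |: T)| <= iS (x |: S).
    apply: subset_leq_card; apply/subsetP => -[a b]; rewrite !inE /=.
    case/orP => [/eqP [-> ->]|/orP [/eqP [-> ->]|/and3P [-> -> ->]]].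
    - by rewrite Fux eqxx uS orbT.
    - by rewrite -symF Fux eqxx uS orbT.
    - by rewrite !orbT.
  rewrite cardsU1 h2 cardsU1 h1 -/(iS S).
  move: iSS; move: (iS S) (iS (x |: S)) => y z; lia.
rewrite negb_exists => /forallP hno.
exists (w |: S); split => //.
have : iS S = 2 * #|S|.
  rewrite /iS.
  have E := card_fst (fun u => u \in S).
  have E3 : #|[set u | u \in S]| = #|S| by apply: eq_card => u; rewrite inE.
  rewrite /= E3 in E; rewrite -E; apply: eq_card => -[a b]; rewrite !inE /=.
  case Fab: (F a b); case aS: (a \in S) => //=.
  by have := hno (a, b); rewrite /= Fab aS /= negbK.
have := iS_sub (subsetUr [set w] S).
move: (iS S) (iS (w |: S)) cS => y z; lia.
Qed.

End Aux.

Lemma exists_perm n (S X : {set 'I_n}) : #|S| = #|X| ->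
  exists f : {perm 'I_n}, forall u, (f u \in X) = (u \in S).
Proof.
move Hm: #|S :\: X| => m; elim: m S Hm => [|m IH] S Hm HS.
  have : S \subset X by rewrite -setD_eq0 -cards_eq0 Hm.
  move=> sSX; have /eqP -> : S == X by rewrite eqEcard sSX HS leqnn.
  by exists 1%g => u; rewrite perm1.
have : 0 < #|S :\: X| by rewrite Hm.
rewrite card_gt0 => /set0Pn [a]; rewrite inE => /andP [aX aS].
have : 0 < #|X :\: S|.
  have h1 := cardsID X S; have h2 := cardsID S X.
  rewrite setIC in h2. lia.
rewrite card_gt0 => /set0Pn [b]; rewrite inE => /andP [bS bX].
have ab : a != b by apply/eqP => eab; move: aX; rewrite eab bX.
pose S' := b |: (S :\ a).
have cS' : #|S'| = #|X|.
  rewrite cardsU1 !inE (negbTE bS) andbF /= -HS (cardsD1 a S) aS; by [].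
have dS' : #|S' :\: X| = m.
  have -> : S' :\: X = (S :\: X) :\ a.
    apply/setP => u; rewrite !inE.
    case: (eqVneq u b) => [->|ub]; first by rewrite bX /= !andbF.
    by rewrite /= andbCA.
  by move: Hm; rewrite (cardsD1 a (S :\: X)) !inE aX aS /=; case.
have [f' hf'] := IH S' dS' cS'.
exists (tperm a b * f')%g => u; rewrite permM hf' !inE.
case: tpermP => [->|->|/eqP ua /eqP ub].
- by rewrite eqxx aS.
- by rewrite (negbTE ab) eqxx /= (negbTE bS).
- by rewrite (negbTE ub) ua.
Qed.

Lemma copy_half n (F : rel 'I_n) (X S : {set 'I_n}) (colX col : bool)
  (f : {perm 'I_n}) : symmetric F -> irreflexive F ->
  (forall u, (f u \in X) = (u \in S)) ->
  2 * copy_col_edges F f (bip_coloring X colX) col = cntQ F (col == colX) S.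
Proof.
move=> sF iF hf; rewrite /cntQ.
have E := @card_half n
  (fun a b => F a b && ((col == colX) == ((a \in S) || (b \in S)))).
rewrite /= in E; rewrite -E.
- clear E; congr (2 * _); apply: eq_card => p; rewrite !inE /bip_coloring !hf.
  by case: (_ || _); case: col; case: colX; case: (F _ _); case: (_ < _).
- by move=> a b; rewrite sF orbC.
- by move=> a; rewrite iF.
Qed.

Theorem lemma3p8 (k : nat) (F : rel 'I_(3 * k)) (X : {set 'I_(3 * k)})
    (colX : bool) :
  1 <= k -> two_factor F -> #|X| = k ->
  (exists f : {perm 'I_(3 * k)},
      2 * k - 1 <= copy_col_edges F f (bip_coloring X colX) true) /\
  (exists f : {perm 'I_(3 * k)},
      2 * k - 1 <= copy_col_edges F f (bip_coloring X colX) false).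
Proof.
move=> k1 [sF iF dF] cX.
have [S1 [cS1 iS1]] := indep_ex sF iF dF (leqnn (3 * k)).
have z1 := iS0 iS1.
have hk : k.-1 < 3 * k by lia.
have [S2 [cS2 iS2]] := conn_ex sF dF hk.
have [f1 hf1] := exists_perm (etrans cS1 (esym cX)).
have [f2 hf2] := exists_perm (etrans cS2 (etrans (prednK k1) (esym cX))).
have t1 := touch sF dF S1.
have t2 := nontouch sF dF S2.
have c1t := copy_half colX true sF iF hf1.
have c1f := copy_half colX false sF iF hf1.
have c2t := copy_half colX true sF iF hf2.
have c2f := copy_half colX false sF iF hf2.
rewrite cS1 in t1; rewrite cS2 in t2.
have ft : (false == true) = false by [].
have tf : (true == false) = false by [].
case: colX c1t c1f c2t c2f => c1t c1f c2t c2f;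
  rewrite ?ft ?tf ?eqxx in c1t c1f c2t c2f; split.
- by exists f1; lia.
- by exists f2; lia.
- by exists f2; lia.
- by exists f1; lia.
Qed.
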